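(* Let $T$ be a finite set, let $(X_t)_{t\in T}$ be a random process with $\mathbf{E}|X_t|<\infty$ for all $t$, and let $(m_t)_{t\in T}$ be real numbers. Then $$\mathbf{E}\Big[\sup_{t\in T}\{X_t+m_t\}\Big]=\sup_{\mu}\Big\{\mathscr{F}(X,\mu)+\sum_{t\in T} m_t\,\mu(\{t\})\Big\},$$ where the supremum is over all probability measures $\mu$ on $T$.
   Context: For a finite set $T$, a probability measure $P_X$ on $\mathbb{R}^T$ with $\int\|x\|\,P_X(dx)<\infty$ and a probability measure $\mu$ on $T$, Fernique's functional is $\mathscr{F}(P_X,\mu)=\sup \mathbf{E}[X_Z]$, where the supremum is over all couplings $(X,Z)$ (pairs of random variables on a common probability space) with $X\sim P_X$ and $Z\sim\mu$. For a random process $X=(X_t)_{t\in T}$ one writes $\mathscr{F}(X,\mu)=\mathscr{F}(P_X,\mu)$ with $P_X$ the law of $X$. *)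

(* Defs.v *)
From HB Require Import structures.
From mathcomp Require Import all_boot all_order all_algebra.
From mathcomp Require Import all_classical all_reals all_analysis.
Set Implicit Arguments. Unset Strict Implicit. Unset Printing Implicit Defensive.
Import Order.TTheory GRing.Theory Num.Theory.
Local Open Scope classical_set_scope.
Local Open Scope ring_scope.

(* A probability measure on the finite set T, given by its weights mu t = mu({t}). *)
Definition is_pmf (R : realType) (T : finType) (mu : T -> R) : Prop :=
  (forall t, 0 <= mu t) /\ \sum_(t in T) mu t = 1.

Definition is_process (R : realType) (d : measure_display) (Omega : measurableType d)
  (T : finType) (X : T -> Omega -> R) : Prop :=
  forall t, measurable_fun setT (X t).

(* Equality of laws of two processes indexed by the finite set T: the laws of
   the random vectors (X_t)_t and (X'_t)_t coincide on all measurable rectangles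
   prod_t B_t (which generate the product sigma-algebra of R^T and form a
   pi-system, so this is equality of the laws on R^T). *)
Definition same_law (R : realType)
  (d : measure_display) (Omega : measurableType d) (P : probability Omega R)
  (d' : measure_display) (Omega' : measurableType d') (P' : probability Omega' R)
  (T : finType) (X : T -> Omega -> R) (X' : T -> Omega' -> R) : Prop :=
  forall B : T -> set R, (forall t, measurable (B t)) ->
    P (\bigcap_(t in [set: T]) (X t @^-1` B t))
    = P' (\bigcap_(t in [set: T]) (X' t @^-1` B t)).

Definition has_law_fin (R : realType) (d : measure_display) (Omega : measurableType d)
  (P : probability Omega R) (T : finType) (Z : Omega -> T) (mu : T -> R) : Prop :=
  forall t, measurable (Z @^-1` [set t]) /\ P (Z @^-1` [set t]) = (mu t)%:E.

(* Fernique's functional F(X, mu) = sup E[X'_Z] over all couplings (X', Z)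
   on a common probability space, with X' distributed as X and Z ~ mu. *)
Definition fernique (R : realType) (d : measure_display) (Omega : measurableType d)
  (P : probability Omega R) (T : finType) (X : T -> Omega -> R) (mu : T -> R) : \bar R :=
  ereal_sup [set e | exists (d' : measure_display) (Omega' : measurableType d')
      (P' : probability Omega' R) (X' : T -> Omega' -> R) (Z : Omega' -> T),
      [/\ is_process X', same_law P P' X X', has_law_fin P' Z mu &
          e = (\int[P']_w ((X' (Z w) w)%:E))%E]].

(* Main.v *)
Require Import Defs.
From HB Require Import structures.
From mathcomp Require Import all_boot all_order all_algebra.
From mathcomp Require Import all_classical all_reals all_analysis.
From mathcomp Require Import measurable_realfun.
Set Implicit Arguments. Unset Strict Implicit. Unset Printing Implicit Defensive.
Import Order.TTheory GRing.Theory Num.Theory.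
Local Open Scope classical_set_scope.
Local Open Scope ring_scope.

Section gen.
Context (R : realType) d (O : measurableType d) (P : probability O R) (T : finType).

Lemma fib_meas (b : O -> {ffun T -> bool}) (g : {ffun T -> bool} -> T) :
  (forall s, measurable [set w | b w s]) ->
  forall t, measurable ((fun w => g (b w)) @^-1` [set t]).
Proof.
move=> mb t.
have -> : (fun w => g (b w)) @^-1` [set t] =
    \bigcup_(v in [set v | g v = t]) \bigcap_(s in [set: T]) [set w | b w s = v s].
  apply/seteqP; split => w /=.
  - by move=> gbt; exists (b w) => // s _.
  - move=> [v /= gv h]; rewrite -gv; congr g; apply/ffunP => s; exact: h.
apply: fin_bigcup_measurable; first exact: finite_finset.
move=> v _; apply: fin_bigcap_measurable; first exact: finite_finset.
move=> s _.
have -> : [set w | b w s = v s] = if v s then [set w | b w s] else ~` [set w | b w s].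
  by case: (v s); apply/seteqP; split => w /=; case: (b w s).
by case: (v s) => //; apply: measurableC.
Qed.

Lemma decomp (Z : O -> T) (f : T -> O -> R) w :
  f (Z w) w = \sum_(t in T) f t w * \1_(Z @^-1` [set t]) w.
Proof.
rewrite (bigD1 (Z w)) //= indicE mem_set // mulr1 big1 ?addr0 // => t tZ.
rewrite indicE memNset ?mulr0 //= => e.
by rewrite e eqxx in tZ.
Qed.

Lemma intZ (X : T -> O -> R) (Z : O -> T) :
  (forall t, measurable (Z @^-1` [set t])) ->
  (forall t, P.-integrable setT (EFin \o X t)) ->
  P.-integrable setT (fun w => (X (Z w) w)%:E).
Proof.
move=> mZ hX.
have -> : (fun w => (X (Z w) w)%:E) =
    fun w => (\sum_(t in T) (X t w * \1_(Z @^-1` [set t]) w)%:E)%E.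
  by apply/funext => w; rewrite decomp sumEFin.
apply: integrable_sum => // t _.
apply: (le_integrable _ _ _ (hX t)) => //.
  apply/measurable_EFinP; apply: measurable_funM.
    exact/measurable_EFinP/(measurable_int _ (hX t)).
  exact: measurable_indic.
move=> w _; rewrite /= lee_fin normrM indicE.
by case: (w \in _); rewrite ?normr1 ?normr0 ?mulr1 ?mulr0.
Qed.

Lemma intmZ (m : T -> R) (Z : O -> T) (mu : T -> R) :
  has_law_fin P Z mu ->
  (\int[P]_w (m (Z w))%:E = (\sum_(t in T) m t * mu t)%:E)%E.
Proof.
move=> hZ.
under eq_integral do rewrite (decomp Z (fun t _ => m t)) -sumEFin.
rewrite integral_sum //; last first.
  move=> t; under eq_fun do rewrite EFinM.
  apply: integrableZl => //. apply: (@integrable_indic _ _ _ P); exact: (hZ t).1.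
rewrite -sumEFin; apply: eq_bigr => t _.
under eq_integral do rewrite EFinM.
rewrite integralZl //; last by apply: (@integrable_indic _ _ _ P); exact: (hZ t).1.
rewrite integral_indic; last exact: (hZ t).1.
by rewrite setIT EFinM; congr (_ * _)%E; exact: (hZ t).2.
by [].
Qed.

End gen.

Section law.
Context (R : realType) d (O : measurableType d) (P : probability O R)
  d' (O' : measurableType d') (P' : probability O' R)
  (Y : O -> R) (Y' : O' -> R) (mY : measurable_fun setT Y) (mY' : measurable_fun setT Y').
Hypothesis hYY : forall c, P (Y @^-1` `]-oo, c[) = P' (Y' @^-1` `]-oo, c[).

Let Ym : {mfun O >-> R} := HB.pack Y (isMeasurableFun.Build _ _ _ _ Y mY).
Let Ym' : {mfun O' >-> R} := HB.pack Y' (isMeasurableFun.Build _ _ _ _ Y' mY').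

Lemma law_push A : measurable A -> distribution P Ym A = distribution P' Ym' A.
Proof.
move=> mA.
have mu := @measure_function.measure_unique _ R _ (@RGenInftyO.G R) (fun k : nat => `]-oo, k%:R[%classic).

apply: (mu _ _ _ _ (distribution P Ym) (distribution P' Ym')).
- exact: RGenInftyO.measurableE.
- move=> _ _ [x ->] [y ->]; exists (Num.min x y).
  by apply/seteqP; split => z /=; rewrite !in_itv /= lt_min; [move=> [-> ->]|move=> /andP].
- by move=> k; exists k%:R.
- apply/seteqP; split => // z _; exists (Num.truncn z).+1 => //=.
  by rewrite in_itv /= truncnS_gt.
- by move=> _ [c ->]; exact: hYY.
- move=> k; apply: (le_lt_trans (probability_le1 _ _)) => //; exact: ltey.
- exact: mA.
Qed.


Lemma law_ge0 (g : R -> \bar R) : measurable_fun setT g -> (forall x, (0 <= g x)%E) ->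
  (\int[P]_w g (Y w) = \int[P']_w g (Y' w))%E.
Proof.
move=> mg g0.
have -> : (\int[P]_w g (Y w) = \int[P]_w (g \o Ym) w)%E by [].
have -> : (\int[P']_w g (Y' w) = \int[P']_w (g \o Ym') w)%E by [].
rewrite -!ge0_integral_distribution //.
apply: eq_measure_integral => B mB _; exact: law_push.
Qed.

Lemma law_int : (\int[P]_w (Y w)%:E = \int[P']_w (Y' w)%:E)%E.
Proof.
rewrite integralE [RHS]integralE.
have mE : measurable_fun [set: R] (EFin : R -> \bar R) by exact/measurable_EFinP.
congr (_ - _)%E.
  move: (law_ge0 (measurable_funepos mE) (fun x => funepos_ge0 _ _)) => h.
  transitivity (\int[P]_w EFin^\+ (Y w))%E; first by apply: eq_integral => w _; rewrite !funeposE.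
  by rewrite h; apply: eq_integral => w _; rewrite ?funenegE ?funeposE.
move: (law_ge0 (measurable_funeneg mE) (fun x => funeneg_ge0 _ _)) => h.
transitivity (\int[P]_w EFin^\- (Y w))%E; first by apply: eq_integral => w _; rewrite !funenegE.
by rewrite h; apply: eq_integral => w _; rewrite ?funenegE ?funeposE.
Qed.
End law.

Section mx.
Context (R : realType) (T : finType) (t0 : T) (m : T -> R).

Definition Mx (x : T -> R) : R := \big[Order.max/x t0 + m t0]_(t in T) (x t + m t).

Lemma Mx_ge x t : x t + m t <= Mx x.
Proof. exact: le_bigmax_cond. Qed.

Lemma Mx_lt x c : (Mx x < c) <-> (forall t, x t + m t < c).
Proof.
split => [/bigmax_ltP [_ h] t|h]; first exact: h.
by apply/bigmax_ltP; split => // t _; exact: h.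
Qed.

Lemma Mx_attain x : exists t, Mx x = x t + m t.
Proof.
rewrite /Mx; apply: (big_ind (fun v => exists t, v = x t + m t)).
- by exists t0.
- move=> a b [i ->] [j ->]; case: (leP (x i + m i) (x j + m j)) => h.
  + by exists j.
  + by exists i.
- by move=> i _; exists i.
Qed.

Lemma Mx_E x : (Mx x)%:E = \big[Order.max/-oo%E]_(t in T) (x t + m t)%:E.
Proof.
rewrite /Mx (big_morph (@EFin R) (@EFin_max R) erefl).
apply/le_anti/andP; split.
- apply: bigmax_le => [|t _]; last exact: le_bigmax_cond.
  by rewrite (bigmaxD1 t0) // le_max lexx.

- apply: bigmax_le => [|t _]; first exact: leNye.
  by rewrite (bigmaxD1 t) // le_max lexx.
Qed.

Lemma Mx_abs x : `|Mx x| <= \sum_(t in T) `|x t + m t|.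
Proof.
have [t ->] := Mx_attain x.
by rewrite (bigD1 t) //= lerDl sumr_ge0.
Qed.

End mx.

Section mxmeas.
Context (R : realType) d (O : measurableType d) (P : probability O R) (T : finType) (t0 : T) (m : T -> R).

Lemma meas_M (X : T -> O -> R) : (forall t, measurable_fun setT (X t)) ->
  measurable_fun setT (fun w => Mx t0 m (fun t => X t w)).
Proof.
move=> mX; rewrite /Mx.
elim: (index_enum T) => [|i s ih].
  rewrite (_ : (fun w => _) = (fun w => X t0 w + m t0)).
    by apply: measurable_funD => //; exact: mX.
  by apply/funext => w; rewrite big_nil.
rewrite (_ : (fun w => _) = (fun w => if i \in T then
   Order.max (X i w + m i) (\big[Order.max/X t0 w + m t0]_(t <- s | t \in T) (X t w + m t))
   else \big[Order.max/X t0 w + m t0]_(t <- s | t \in T) (X t w + m t))); last first.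
  by apply/funext => w; rewrite big_cons.
case: (i \in T) => //.
by apply: measurable_maxr => //; apply: measurable_funD => //; exact: mX.
Qed.

Lemma int_M (X : T -> O -> R) : (forall t, P.-integrable setT (EFin \o X t)) ->
  P.-integrable setT (fun w => (Mx t0 m (fun t => X t w))%:E).
Proof.
move=> hX.
have mX t : measurable_fun setT (X t).
  exact/measurable_EFinP/(measurable_int _ (hX t)).
apply: (le_integrable _ (g := fun w => (\sum_(t in T) (`|X t w| + `|m t|)%:E)%E)) => //.
- exact/measurable_EFinP/meas_M.
- move=> w _; rewrite sumEFin /= lee_fin [X in _ <= X]ger0_norm; last first.
    by apply: sumr_ge0 => t _; rewrite addr_ge0.
  apply: le_trans (Mx_abs _ _ _) _; apply: ler_sum => t _; exact: ler_normD.
- apply: integrable_sum => // t _.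
  under eq_fun do rewrite EFinD.
  apply: integrableD => //.
    exact: (integrable_abse (hX t)).
  exact: (finite_measure_integrable_cst P (`|m t|)).
Qed.

End mxmeas.

Theorem mainTheorem4 (R : realType) (d : measure_display) (Omega : measurableType d)
  (P : probability Omega R) (T : finType) (X : T -> Omega -> R) (m : T -> R) :
  is_process X ->
  (forall t, P.-integrable setT (EFin \o X t)) ->
  (\int[P]_w (\big[Order.max/-oo%E]_(t in T) ((X t w + m t)%:E)))%E
  = ereal_sup [set e | exists mu : T -> R, is_pmf mu /\
                 e = (fernique P X mu + (\sum_(t in T) m t * mu t)%:E)%E].
Proof.
move=> mX iX.
have [t0 _|T0] := pickP (fun _ : T => true); last first.
  have E (F : T -> \bar R) : \big[Order.max/-oo%E]_(t in T) F t = -oo%E.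
    by rewrite big_pred0 // => t; have := T0 t.
  under eq_integral do rewrite E.
  rewrite integral_cst //.
  transitivity (-oo * 1 : \bar R)%E; first by congr (_ * _)%E; exact: probability_setT.
  rewrite mule1.
  rewrite (_ : [set e | _] = set0) ?ereal_sup0 //.
  apply/seteqP; split => // e [mu [[_ h] _]]; move: h.
  rewrite big_pred0 => [|t]; last by have := T0 t.
  by move=> /esym/eqP; rewrite oner_eq0.
pose M w := Mx t0 m (fun t => X t w).
have LHSE : (\int[P]_w (\big[Order.max/-oo%E]_(t in T) ((X t w + m t)%:E))
    = \int[P]_w (M w)%:E)%E.
  by apply: eq_integral => w _; rewrite /M Mx_E.
rewrite LHSE.
have mM : measurable_fun setT M by exact: meas_M.
have imZ (d2 : measure_display) (O' : measurableType d2) (P' : probability O' R) (Z : O' -> T) :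
    (forall t, measurable (Z @^-1` [set t])) ->
    P'.-integrable setT (fun w => (m (Z w))%:E).
  move=> mZ; apply: (intZ (X := fun t _ => m t)) => // t.
  exact: (finite_measure_integrable_cst P' (m t)).
apply/le_anti/andP; split.
- pose b w : {ffun T -> bool} := [ffun s => X s w + m s == M w].
  pose g (v : {ffun T -> bool}) := odflt t0 [pick s | v s].
  pose Z w := g (b w).
  have mZ t : measurable (Z @^-1` [set t]).
    apply: fib_meas => s.
    rewrite (_ : [set w | b w s] = (fun w => X s w + m s == M w) @^-1` [set true]); last first.
      by apply/seteqP; split => w /=; rewrite /b ffunE.
    rewrite -[X in measurable X]setTI.
    apply: measurable_fun_eqr => //.
    by apply: measurable_funD => //; exact: mX.
  have hZ w : X (Z w) w + m (Z w) = M w.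
    rewrite /Z /g; case: pickP => [s|] /=; first by rewrite ffunE => /eqP.
    move=> h; have [t ht] := Mx_attain t0 m (fun t => X t w).
    by have := h t; rewrite ffunE /M ht eqxx.
  pose mu t := fine (P (Z @^-1` [set t])).
  have hlaw : has_law_fin P Z mu.
    move=> t; split => //; rewrite /mu fineK //; exact: fin_num_measure.
  have pmf : is_pmf mu.
    split; first by move=> t; rewrite /mu fine_ge0 // measure_ge0.
    have := intmZ (fun _ => 1) hlaw; rewrite integral_cst // => h.
    have h' : (1%:E * P [set: Omega] = (\sum_(t in T) 1 * mu t)%:E)%E := h.
    move: h'; rewrite (@probability_setT _ _ _ P) mul1e => h2.
    have h1 := EFin_inj (esym h2).
    by rewrite -[RHS]h1; apply: eq_bigr => t _; rewrite mul1r.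
  apply: (@le_trans _ _ (fernique P X mu + (\sum_(t in T) m t * mu t)%:E)%E); last first.
    by apply: ereal_sup_ubound; exists mu; split.
  apply: (@le_trans _ _ (\int[P]_w (X (Z w) w)%:E + (\sum_(t in T) m t * mu t)%:E)%E); last first.
    apply: leeD2r; apply: ereal_sup_ubound.
    by exists d, Omega, P, X, Z; split => //; move=> B _.
  rewrite -(intmZ m hlaw) -integralD //; [|exact: intZ|exact: imZ].
  rewrite le_eqVlt; apply/orP; left; apply/eqP.
  by apply: eq_integral => w _; rewrite -EFinD hZ.
- apply: ge_ereal_sup => _ [mu [pm ->]].
  rewrite -leeBrDr //.
  apply: ge_ereal_sup => _ [dd [Om2 [P2 [X2 [Z [mX2 hlaw2 hZ2 ->]]]]]].
  rewrite leeBrDr //.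
  have hlawt t c : P (X t @^-1` `]-oo, c[) = P2 (X2 t @^-1` `]-oo, c[).
    have E (Q : Type) (Y : T -> Q -> R) :
        \bigcap_(s in [set: T]) (Y s @^-1` (if s == t then `]-oo,c[%classic else setT))
        = Y t @^-1` `]-oo,c[%classic.
      apply/seteqP; split => w /=.
        by move=> h; have := h t I; rewrite eqxx.
      by move=> h s _; case: eqP => [-> //|].
    rewrite -E -[in RHS]E; apply: hlaw2 => s.
    by case: (s == t) => //; exact: measurable_itv.
  have iX2 t : P2.-integrable setT (EFin \o X2 t).
    apply/integrableP; split; first exact/measurable_EFinP/mX2.
    have mg : measurable_fun setT (fun x : R => `|x%:E|%E).
      by apply: measurableT_comp => //; exact: measurable_EFinP.
    have := law_ge0 (mX t) (mX2 t) (hlawt t) mg (fun _ => abse_ge0 _).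
    move=> <-; by case/integrableP: (iX t).
  pose M' w := Mx t0 m (fun t => X2 t w).
  have hM c : P (M @^-1` `]-oo,c[) = P2 (M' @^-1` `]-oo,c[).
    have E (Q : Type) (Y : T -> Q -> R) :
        (fun w => Mx t0 m (fun t => Y t w)) @^-1` `]-oo,c[
        = \bigcap_(s in [set: T]) (Y s @^-1` `]-oo, c - m s[).
      apply/seteqP; split => w /=; rewrite in_itv /=.
        by move/Mx_lt => h s _ /=; rewrite in_itv /= ltrBrDr h.
      move=> h; apply/Mx_lt => s; have := h s I.
      by rewrite /= in_itv /= ltrBrDr.
    rewrite /M /M' !E; apply: hlaw2 => s; exact: measurable_itv.
  have -> : (\int[P]_w (M w)%:E = \int[P2]_w (M' w)%:E)%E.
    exact: (law_int mM (meas_M t0 m mX2) hM).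
  have mZ t : measurable (Z @^-1` [set t]) by exact: (hZ2 t).1.
  rewrite -(intmZ m hZ2) -integralD //; [|exact: intZ|exact: imZ].
  apply: le_integral => //.
    by apply: integrableD => //; [exact: intZ|exact: imZ].
    exact: int_M.
  by move=> w _; rewrite -EFinD lee_fin; exact: Mx_ge.
Qed.
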